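(* Let $\mathcal{C}=(\mathcal{T},\mathcal{I},\mathcal{R})$ be an extraction context with thresholds \textit{minsupp} and \textit{minbond}. Then $\mathcal{M}in\mathcal{MCR}=\mathcal{CRCP}\cup\mathcal{M}in\mathcal{MRCP}$, with each element $J$ recorded together with $\mathit{Supp}(\wedge J)$ and $\mathit{bond}(J)$, is an exact concise representation of the set $\mathcal{RCP}$ of rare correlated patterns.
   Context: An extraction context is a triple $\mathcal{C}=(\mathcal{T},\mathcal{I},\mathcal{R})$ with $\mathcal{T}$ a finite set of transactions, $\mathcal{I}$ a finite set of items and $\mathcal{R}\subseteq\mathcal{T}\times\mathcal{I}$. For a pattern $I\subseteq\mathcal{I}$: $\mathit{Supp}(\wedge I)=|\{t:\forall i\in I,(t,i)\in\mathcal{R}\}|$, $\mathit{Supp}(\vee I)=|\{t:\exists i\in I,(t,i)\in\mathcal{R}\}|$, and for nonempty $I$, $\mathit{bond}(I)=\mathit{Supp}(\wedge I)/\mathit{Supp}(\vee I)$ (with $\mathit{bond}(\emptyset)=+\infty$ by convention). $\mathcal{RCP}=\{I\subseteq\mathcal{I}:\mathit{Supp}(\wedge I)<\textit{minsupp},\ \mathit{bond}(I)\ge\textit{minbond}\}$. $\mathcal{CRCP}=\{I\in\mathcal{RCP}:\forall I_1\supsetneq I,\ \mathit{bond}(I)>\mathit{bond}(I_1)\}$; $\mathcal{MRCP}=\{I\in\mathcal{RCP}:\forall I_1\subsetneq I,\ \mathit{bond}(I)<\mathit{bond}(I_1)\}$. Minimal rare patterns: $\mathcal{M}in\mathcal{RP}$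 is the set of patterns $I$ with $\mathit{Supp}(\wedge I)<\textit{minsupp}$ such that every proper subset $I_1\subsetneq I$ satisfies $\mathit{Supp}(\wedge I_1)\ge\textit{minsupp}$. $\mathcal{M}in\mathcal{MRCP}=\mathcal{MRCP}\cap\mathcal{M}in\mathcal{RP}$. A family $\mathcal{S}\subseteq\mathcal{RCP}$, with each $J\in\mathcal{S}$ recorded together with $\mathit{Supp}(\wedge J)$ and $\mathit{bond}(J)$, is an exact concise representation of $\mathcal{RCP}$ if, for every pattern $I\subseteq\mathcal{I}$, the recorded data alone suffice to decide whether $I\in\mathcal{RCP}$ and, when $I\in\mathcal{RCP}$, to determine exactly $\mathit{Supp}(\wedge I)$ and $\mathit{bond}(I)$. *)

(* Defs.v *)
From mathcomp Require Import all_boot all_order all_algebra.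
Set Implicit Arguments. Unset Strict Implicit. Unset Printing Implicit Defensive.
Import Order.TTheory GRing.Theory Num.Theory.
Local Open Scope ring_scope.

(* An extraction context: a finite set of transactions [Tr], a finite set of
   items [Item], and a relation [R : Tr -> Item -> bool]. Patterns are
   [{set Item}]. *)
Section Defs.
Variables (Tr Item : finType) (R : Tr -> Item -> bool).

Definition suppAnd (I : {set Item}) : nat :=
  #|[set t : Tr | [forall i in I, R t i]]|.

Definition suppOr (I : {set Item}) : nat :=
  #|[set t : Tr | [exists i in I, R t i]]|.

(* bond, valued in [option rat] where [None] stands for +infinity
   (the convention bond(emptyset) = +oo). *)
Definition bond (I : {set Item}) : option rat :=
  if I == set0 then None else Some ((suppAnd I)%:R / (suppOr I)%:R).

End Defs.

Definition bond_ge (b : option rat) (m : rat) : bool :=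
  if b is Some r then m <= r else true.

Definition bond_lt (b1 b2 : option rat) : bool :=
  match b1, b2 with
  | Some r1, Some r2 => r1 < r2
  | Some _, None => true
  | None, _ => false
  end.

Section Classes.
Variables (Tr Item : finType) (R : Tr -> Item -> bool).
Variables (minsupp : nat) (minbond : rat).

Definition RCP (I : {set Item}) : bool :=
  (suppAnd R I < minsupp)%N && bond_ge (bond R I) minbond.

Definition CRCP (I : {set Item}) : bool :=
  RCP I && [forall I1 : {set Item}, (I \proper I1) ==> bond_lt (bond R I1) (bond R I)].

Definition MRCP (I : {set Item}) : bool :=
  RCP I && [forall I1 : {set Item}, (I1 \proper I) ==> bond_lt (bond R I) (bond R I1)].

Definition MinRP (I : {set Item}) : bool :=
  (suppAnd R I < minsupp)%N &&
  [forall I1 : {set Item}, (I1 \proper I) ==> (minsupp <= suppAnd R I1)%N].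

Definition MinMRCP (I : {set Item}) : bool := MRCP I && MinRP I.

Definition MinMCR : {set {set Item}} := [set I | CRCP I || MinMRCP I].

End Classes.

Definition recorded (Tr Item : finType) (R : Tr -> Item -> bool)
  (S : {set {set Item}}) : {set Item} -> option (nat * option rat) :=
  fun J => if J \in S then Some (suppAnd R J, bond R J) else None.

(* A family S (depending on the context) is an exact concise representation
   of RCP if S is included in RCP and there is a single decoding procedure,
   which only sees the recorded data (not the context itself), that for every
   context and every pattern I decides whether I is in RCP and, if so, returns
   Supp(/\ I) and bond(I). The decoder may depend on the item set and the
   thresholds, but not on the transactions or on the relation R. *)
Definition exact_concise_rep (Item : finType) (minsupp : nat) (minbond : rat)
  (S : forall Tr : finType, (Tr -> Item -> bool) -> {set {set Item}}) : Prop :=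
  (forall (Tr : finType) (R : Tr -> Item -> bool),
      {subset S Tr R <= [pred I | RCP R minsupp minbond I]}) /\
  exists Dec : ({set Item} -> option (nat * option rat)) -> {set Item} ->
               option (nat * option rat),
    forall (Tr : finType) (R : Tr -> Item -> bool) (I : {set Item}),
      Dec (recorded R (S Tr R)) I =
      if RCP R minsupp minbond I then Some (suppAnd R I, bond R I) else None.

(* Main.v *)
Require Import Defs.
From mathcomp Require Import all_boot all_order all_algebra.
From mathcomp Require Import zify.
Import Order.TTheory GRing.Theory Num.Theory.
Local Open Scope ring_scope.

Definition bond_le (b1 b2 : option rat) : bool := ~~ bond_lt b2 b1.

Lemma bond_le_ge b1 b2 m : bond_le b1 b2 -> bond_ge b1 m -> bond_ge b2 m.
Proof.
rewrite /bond_le; case: b1 => [r1|]; case: b2 => [r2|] //=.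
rewrite -leNgt => h1 h2; exact: le_trans h2 h1.
Qed.

Lemma bond_le_antisym b1 b2 : bond_le b1 b2 -> bond_le b2 b1 -> b1 = b2.
Proof.
rewrite /bond_le; case: b1 => [r1|]; case: b2 => [r2|] //=.
rewrite -!leNgt => h1 h2; congr Some; apply/eqP; by rewrite eq_le h1 h2.
Qed.

Lemma bond_le_neq_lt b1 b2 : bond_le b1 b2 -> b1 != b2 -> bond_lt b1 b2.
Proof.
rewrite /bond_le; case: b1 => [r1|]; case: b2 => [r2|] //=.
rewrite -!leNgt => h1 h2; rewrite lt_neqAle h1 andbT.
by apply: contra h2 => /eqP ->.
Qed.

Section Lemmas.
Context {Tr Item : finType} (R : Tr -> Item -> bool).

Lemma suppAnd_anti {I J : {set Item}} : J \subset I -> (suppAnd R I <= suppAnd R J)%N.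
Proof.
move=> sJI; apply: subset_leq_card; apply/subsetP => t; rewrite !inE.
move=> /forallP h; apply/forallP => i; apply/implyP => iJ.
by have /implyP := h i; apply; apply: (subsetP sJI).
Qed.

Lemma suppOr_mono {I J : {set Item}} : J \subset I -> (suppOr R J <= suppOr R I)%N.
Proof.
move=> sJI; apply: subset_leq_card; apply/subsetP => t; rewrite !inE.
move=> /existsP [i /andP [iJ h]]; apply/existsP; exists i.
by rewrite h (subsetP sJI).
Qed.

Lemma suppAnd_le_Or {I : {set Item}} : I != set0 -> (suppAnd R I <= suppOr R I)%N.
Proof.
case/set0Pn => i iI; apply: subset_leq_card; apply/subsetP => t; rewrite !inE.
move=> /forallP h; apply/existsP; exists i; rewrite iI /=.
by have /implyP := h i; apply.
Qed.

Lemma bond_anti {I J : {set Item}} : J \subset I -> bond_le (bond R I) (bond R J).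
Proof.
move=> sJI; rewrite /bond.
case hJ: (J == set0); first by case: (I == set0).
have nJ : J != set0 by rewrite hJ.
have nI : I != set0.
  apply: contra nJ => /eqP I0; by rewrite -subset0 -I0.
rewrite (negbTE nI) /bond_le /= -leNgt.
have h1 := suppAnd_anti sJI; have h2 := suppOr_mono sJI.
have h3 := suppAnd_le_Or nJ; have h4 := suppAnd_le_Or nI.
set aI := suppAnd R I in h1 h4 *; set aJ := suppAnd R J in h1 h3 *.
set bI := suppOr R I in h2 h4 *; set bJ := suppOr R J in h2 h3 *.
have [bI0|bIp] := posnP bI.
  by rewrite bI0 invr0 mulr0 divr_ge0.
have [bJ0|bJp] := posnP bJ.
  have aJ0 : aJ = 0%N by lia.
  have aI0 : aI = 0%N by lia.
  by rewrite aI0 aJ0 !mul0r.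
rewrite ler_pdivlMr ?ltr0n // mulrAC ler_pdivrMr ?ltr0n // -!natrM ler_nat.
nia.
Qed.

Lemma bond_eq_supp (minbond : rat) {I J : {set Item}} : 0 < minbond ->
  I \subset J -> bond_ge (bond R I) minbond -> bond R J = bond R I ->
  suppAnd R J = suppAnd R I.
Proof.
move=> mb sIJ; rewrite /bond.
case: eqP => [I0|/eqP nI].
  case: eqP => [J0|] //; by rewrite I0 J0.
have nJ : J != set0.
  by apply: contra nI => /eqP J0; rewrite -subset0 -J0.
rewrite (negbTE nJ) /= => hge [].
have h1 := suppAnd_anti sIJ; have h2 := suppOr_mono sIJ.
set aI := suppAnd R I in h1 hge *; set aJ := suppAnd R J in h1 *.
set bI := suppOr R I in h2 hge *; set bJ := suppOr R J in h2 *.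
have [aI0|aIp] := posnP aI.
  by move: (lt_le_trans mb hge); rewrite aI0 mul0r ltxx.
have [bI0|bIp] := posnP bI.
  by move: (lt_le_trans mb hge); rewrite bI0 invr0 mulr0 ltxx.
move/eqP; rewrite eqr_div ?pnatr_eq0 -?lt0n //; last by apply: leq_trans h2.
rewrite -!natrM eqr_nat => /eqP e.
nia.
Qed.

End Lemmas.

Definition issome (o : option (nat * option rat)) : bool :=
  if o is Some _ then true else false.
Definition getb (o : option (nat * option rat)) : option rat :=
  if o is Some (_, b) then b else None.
Definition gets (o : option (nat * option rat)) : nat :=
  if o is Some (s, _) then s else 0%N.

Theorem mainTheorem7 (Item : finType) (minsupp : nat) (minbond : rat)
  (hminbond : 0 < minbond) :
  exact_concise_rep minsupp minbond
    (fun (Tr : finType) (R : Tr -> Item -> bool) => MinMCR R minsupp minbond).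
Proof.
split.
  move=> Tr R I; rewrite inE => /orP [/andP [h _]| /andP [/andP [h _] _]];
  by rewrite inE.
pose Dec (rec : {set Item} -> option (nat * option rat)) (I : {set Item}) :=
  if [exists J : {set Item}, (J \subset I) && issome (rec J)] then
    match [pick J | [&& issome (rec J), I \subset J &
        [forall J', (issome (rec J') && (I \subset J')) ==>
                     bond_le (getb (rec J')) (getb (rec J))]]] with
    | Some J => if bond_ge (getb (rec J)) minbond
                then Some (gets (rec J), getb (rec J)) else None
    | None => None
    end
  else None.
exists Dec => Tr R I.
set S := MinMCR R minsupp minbond.
have isS J : issome (recorded R S J) = (J \in S) by rewrite /recorded; case: ifP.
have gbS J : J \in S -> getb (recorded R S J) = bond R J by rewrite /recorded => ->.
have gsS J : J \in S -> gets (recorded R S J) = suppAnd R J by rewrite /recorded => ->.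
have SR J : J \in S -> RCP R minsupp minbond J.
  by rewrite inE => /orP [/andP [h _]| /andP [/andP [h _] _]].
rewrite /Dec.
case hI: (RCP R minsupp minbond I).
  move: (hI) => /andP [hrare hbge].
  have [M [sMI MS]] : exists M : {set Item}, M \subset I /\ M \in S.
    pose P (J : {set Item}) := (J \subset I) && (suppAnd R J < minsupp)%N.
    have PI : P I by rewrite /P subxx hrare.
    case: (arg_minnP (fun J : {set Item} => #|J|) PI) => M /andP [sMI rM] Mmin.
    exists M; split => //.
    have freq (M1 : {set Item}) : M1 \proper M -> (minsupp <= suppAnd R M1)%N.
      move=> pM1; rewrite leqNgt; apply/negP => r1.
      have := Mmin M1; rewrite /P r1 (subset_trans (proper_sub pM1) sMI) => /(_ isT).
      by rewrite leqNgt proper_card.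
    rewrite inE; apply/orP; right; rewrite /MinMRCP /MRCP /MinRP.
    have rcpM : RCP R minsupp minbond M.
      by rewrite /RCP rM /=; apply: bond_le_ge (bond_anti R sMI) hbge.
    rewrite rcpM rM /=; apply/andP; split; apply/forallP => M1; apply/implyP => pM1;
      last exact: freq.
    have nM : M != set0.
      apply/set0Pn; case/properP: pM1 => _ [x xM _]; by exists x.
    rewrite /bond (negbTE nM); case: eqP => [//|/eqP n1] /=.
    have f1 := freq _ pM1.
    have h2 := suppOr_mono R (proper_sub pM1).
    have h3 := suppAnd_le_Or R n1.
    rewrite ltr_pdivrMr ?ltr0n; last by lia.
    rewrite mulrAC ltr_pdivlMr ?ltr0n; last by lia.
    rewrite -!natrM ltr_nat; nia.
  have -> : [exists J : {set Item}, (J \subset I) && issome (recorded R S J)].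
    by apply/existsP; exists M; rewrite sMI isS.
  have [C [sIC CS bC]] : exists C : {set Item}, [/\ I \subset C, C \in S & bond R C = bond R I].
    pose P (J : {set Item}) := (I \subset J) && (bond R J == bond R I).
    have PI : P I by rewrite /P subxx eqxx.
    case: (arg_maxnP (fun J : {set Item} => #|J|) PI) => C /andP [sIC /eqP bC] Cmax.
    exists C; split => //.
    rewrite inE; apply/orP; left; rewrite /CRCP.
    have -> : RCP R minsupp minbond C.
      rewrite /RCP bC hbge andbT; apply: leq_ltn_trans hrare.
      exact: suppAnd_anti.
    apply/forallP => J1; apply/implyP => pJ1 /=.
    apply: bond_le_neq_lt; first exact: bond_anti (proper_sub pJ1).
    rewrite bC; apply/negP => /eqP e.
    have := Cmax J1; rewrite /P e eqxx (subset_trans sIC (proper_sub pJ1)) => /(_ isT).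
    by move=> h; have := leq_trans (proper_card pJ1) h; rewrite ltnn.
  case: pickP => [J /and3P [JS sIJ hmax] | hnone].
    rewrite isS in JS; rewrite (gbS _ JS) (gsS _ JS).
    have le1 : bond_le (bond R C) (bond R J).
      have /implyP := forallP hmax C; rewrite isS CS sIC gbS // (gbS _ JS).
      by apply.
    have bJ : bond R J = bond R I.
      apply: bond_le_antisym; first exact: bond_anti.
      by rewrite -bC.
    by rewrite bJ hbge (bond_eq_supp R minbond hminbond sIJ hbge bJ).
  have := hnone C; rewrite isS CS sIC /=; move/negP; case.
  apply/forallP => J'; apply/implyP => /andP [J'S sIJ']; rewrite isS in J'S.
  rewrite (gbS _ J'S) (gbS _ CS) bC; exact: bond_anti.
case: existsP => // [[J0 /andP [sJ0I J0S]]].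
rewrite isS in J0S.
have rI : (suppAnd R I < minsupp)%N.
  apply: leq_ltn_trans (suppAnd_anti R sJ0I) _.
  by case/andP: (SR _ J0S).
have nb : bond_ge (bond R I) minbond = false by move: hI; rewrite /RCP rI.
case: pickP => // J /and3P [JS sIJ _].
rewrite isS in JS; rewrite (gbS _ JS).
case hb: (bond_ge (bond R J) minbond) => //.
by move: nb; rewrite (bond_le_ge _ _ _ (bond_anti R sIJ) hb).
Qed.
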